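(* Let $(g,[\cdot,\cdot]_1,[\cdot,\cdot]_2,\alpha,\beta)$ be a compatible BiHom-Lie algebra and $(V,\bullet_1,\bullet_2,\alpha_V,\beta_V)$ a representation of it, where $\alpha,\beta,\alpha_V,\beta_V$ are bijective. Then $g\oplus V$ carries a compatible BiHom-Lie algebra structure $(g\oplus V,[\cdot,\cdot]^{\ltimes}_1,[\cdot,\cdot]^{\ltimes}_2,\alpha\oplus\alpha_V,\beta\oplus\beta_V)$, where $(\alpha\oplus\alpha_V)(p,a)=(\alpha(p),\alpha_V(a))$, $(\beta\oplus\beta_V)(p,a)=(\beta(p),\beta_V(a))$ and, for $i=1,2$, $$[(p,a),(q,b)]^{\ltimes}_i=\big([p,q]_i,\ p\bullet_i b-(\alpha^{-1}\beta(q))\bullet_i(\alpha_V\beta_V^{-1}(a))\big),\qquad (p,a),(q,b)\in g\oplus V.$$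
   Context: A BiHom-Lie algebra is a 4-tuple $(g,[\cdot,\cdot],\alpha,\beta)$ with $\alpha,\beta:g\to g$ linear and $[\cdot,\cdot]$ bilinear such that $\alpha\circ\beta=\beta\circ\alpha$, $[\beta(p),\alpha(q)]=-[\beta(q),\alpha(p)]$ and $[\beta^{2}(p),[\beta(q),\alpha(r)]]+[\beta^{2}(q),[\beta(r),\alpha(p)]]+[\beta^{2}(r),[\beta(p),\alpha(q)]]=0$. A compatible BiHom-Lie algebra $(g,[\cdot,\cdot]_1,[\cdot,\cdot]_2,\alpha,\beta)$: both $(g,[\cdot,\cdot]_i,\alpha,\beta)$ are BiHom-Lie algebras and $(g,\lambda[\cdot,\cdot]_1+\eta[\cdot,\cdot]_2,\alpha,\beta)$ is a BiHom-Lie algebra for all $\lambda,\eta\in\mathbb{K}$. A representation of a BiHom-Lie algebra $(g,[\cdot,\cdot],\alpha,\beta)$ is $(V,\bullet,\alpha_V,\beta_V)$ with $\alpha_V,\beta_V:V\to V$ commuting linear maps and $\bullet:g\otimes V\to V$ bilinear satisfying, for all $p,q\in g$, $v\in V$: $\alpha(p)\bullet\alpha_V(v)=\alpha_V(p\bullet v)$; $\beta(p)\bullet\beta_V(v)=\beta_V(p\bullet v)$; $[\beta(p),q]\bullet\beta_V(v)=\alpha\beta(p)\bullet(q\bullet v)-\beta(q)\bullet(\alpha(p)\bullet v)$. A representation of the compatible BiHom-Lie algebra is $(V,\bullet_1,\bullet_2,\alpha_V,\beta_V)$ such that $(V,\bullet_i,\alpha_V,\beta_V)$ is a representation of $(g,[\cdot,\cdot]_i,\alpha,\beta)$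 for $i=1,2$ and $[\beta(p),q]_1\bullet_2\beta_V(v)+[\beta(p),q]_2\bullet_1\beta_V(v)=\alpha\beta(p)\bullet_1(q\bullet_2 v)-\beta(q)\bullet_2(\alpha(p)\bullet_1 v)+\alpha\beta(p)\bullet_2(q\bullet_1 v)-\beta(q)\bullet_1(\alpha(p)\bullet_2 v)$ for all $p,q\in g$, $v\in V$. *)

(* Defs.v *)
From HB Require Import structures.
From mathcomp Require Import all_boot all_order all_algebra.
Set Implicit Arguments. Unset Strict Implicit. Unset Printing Implicit Defensive.
Import GRing.Theory.
Local Open Scope ring_scope.

Definition bilinear_map (K : fieldType) (U W : lmodType K) (X : lmodType K)
  (f : U -> W -> X) : Prop :=
  (forall x, linear (f x)) /\ (forall y, linear (fun x => f x y)).

Definition BiHomLie (K : fieldType) (g : lmodType K) (br : g -> g -> g)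
  (al be : g -> g) : Prop :=
  [/\ linear al /\ linear be, bilinear_map br,
      al \o be =1 be \o al,
      (forall p q, br (be p) (al q) = - br (be q) (al p)) &
      (forall p q r,
         br (be (be p)) (br (be q) (al r)) + br (be (be q)) (br (be r) (al p))
         + br (be (be r)) (br (be p) (al q)) = 0)].

Definition CompatBiHomLie (K : fieldType) (g : lmodType K)
  (br1 br2 : g -> g -> g) (al be : g -> g) : Prop :=
  [/\ BiHomLie br1 al be, BiHomLie br2 al be &
      forall lam eta : K,
        BiHomLie (fun x y => lam *: br1 x y + eta *: br2 x y) al be].

Definition BiHomRep (K : fieldType) (g V : lmodType K) (br : g -> g -> g)
  (al be : g -> g) (act : g -> V -> V) (alV beV : V -> V) : Prop :=
  [/\ linear alV /\ linear beV, bilinear_map act,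
      alV \o beV =1 beV \o alV,
      (forall p v, act (al p) (alV v) = alV (act p v)) /\
      (forall p v, act (be p) (beV v) = beV (act p v)) &
      (forall p q v, act (br (be p) q) (beV v)
                     = act (al (be p)) (act q v) - act (be q) (act (al p) v))].

Definition CompatBiHomRep (K : fieldType) (g V : lmodType K)
  (br1 br2 : g -> g -> g) (al be : g -> g)
  (act1 act2 : g -> V -> V) (alV beV : V -> V) : Prop :=
  [/\ BiHomRep br1 al be act1 alV beV, BiHomRep br2 al be act2 alV beV &
      forall p q v,
        act2 (br1 (be p) q) (beV v) + act1 (br2 (be p) q) (beV v)
        = act1 (al (be p)) (act2 q v) - act2 (be q) (act1 (al p) v)
          + act2 (al (be p)) (act1 q v) - act1 (be q) (act2 (al p) v)].

Definition dsum_map (K : fieldType) (g V : lmodType K) (f : g -> g) (h : V -> V)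
  (x : g * V) : g * V := (f x.1, h x.2).

Definition semidirect_br (K : fieldType) (g V : lmodType K) (br : g -> g -> g)
  (act : g -> V -> V) (al_inv be : g -> g) (alV beV_inv : V -> V)
  (x y : g * V) : g * V :=
  (br x.1 y.1, act x.1 y.2 - act (al_inv (be y.1)) (alV (beV_inv x.2))).

(* Main.v *)
Require Import Defs.
From HB Require Import structures.
From mathcomp Require Import all_boot all_order all_algebra.
From Stdlib Require Import FunctionalExtensionality.
Import GRing.Theory.
Local Open Scope ring_scope.
Set Implicit Arguments. Unset Strict Implicit.
Section Lin.
Variables (K : fieldType) (U W : lmodType K) (f : U -> W).
Hypothesis lf : linear f.
Lemma linD u v : f (u + v) = f u + f v.
Proof. by rewrite -[u in LHS]scale1r lf scale1r. Qed.
Lemma lin0 : f 0 = 0.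
Proof. by apply: (@addrI _ (f 0)); rewrite -linD !addr0. Qed.
Lemma linZ a u : f (a *: u) = a *: f u.
Proof. by rewrite -[a *: u]addr0 lf lin0 addr0. Qed.
Lemma linN u : f (- u) = - f u.
Proof. by rewrite -scaleN1r linZ scaleN1r. Qed.
Lemma linB u v : f (u - v) = f u - f v.
Proof. by rewrite linD linN. Qed.
Lemma lin_inv finv : cancel f finv -> cancel finv f -> linear finv.
Proof. move=> H1 H2 a u v; apply: (can_inj H1); by rewrite lf !H2. Qed.
End Lin.

Lemma comm_inv (T : Type) (f finv h : T -> T) :
  f \o h =1 h \o f -> cancel f finv -> cancel finv f -> forall x, finv (h x) = h (finv x).
Proof. move=> C H1 H2 x; apply: (can_inj H1); rewrite H2; have := C (finv x) => /= ->; by rewrite H2. Qed.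
Section SD.
Variables (K : fieldType) (g V : lmodType K) (br : g -> g -> g) (al be : g -> g)
  (act : g -> V -> V) (alV beV : V -> V)
  (al_inv : g -> g) (alV_inv beV_inv : V -> V)
  (Hal : cancel al al_inv) (Hal' : cancel al_inv al)
  (HalV : cancel alV alV_inv) (HalV' : cancel alV_inv alV)
  (HbeV : cancel beV beV_inv) (HbeV' : cancel beV_inv beV).
Hypothesis HL : BiHomLie br al be.
Hypothesis HR : BiHomRep br al be act alV beV.

Lemma keyK q r a :
  act (al_inv (be (br (be q) (al r)))) (alV (beV a)) =
  act (be (be q)) (act (be r) (alV a)) - act (be (be r)) (act (be q) (alV a)).
Proof.
case: HL => [[lal lbe] [bl1 bl2] cab skew jac].
case: HR => [[lalV lbeV] [al1 al2] cabV [eqa eqb] rep].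
have ci := comm_inv cab Hal Hal'.
have ciV := comm_inv cabV HalV HalV'.
have ciVb : forall v, beV_inv (alV v) = alV (beV_inv v).
  move=> v; apply: (can_inj HbeV); rewrite HbeV'; have := cabV (beV_inv v) => /= <-; by rewrite HbeV'.
have cabv : forall v, alV (beV v) = beV (alV v) by move=> v; exact: (cabV v).
have cab' : forall x, al (be x) = be (al x) by move=> x; exact: (cab x).
have eqai : forall p v, act (al_inv p) (alV_inv v) = alV_inv (act p v).
  move=> p v; apply: (can_inj HalV); by rewrite -eqa Hal' !HalV'.
rewrite ci cabv eqb.
have E : act (al_inv (br (be q) (al r))) (alV a) = alV_inv (act (br (be q) (al r)) (alV (alV a))) by rewrite -eqai HalV.
rewrite E.
set v0 := alV a.
rewrite -{1}[alV v0]HbeV' ciVb rep.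
rewrite !eqa -cab' !eqa -(linB lalV) HalV.
rewrite (linB lbeV) -!eqb HbeV'.
done.
Qed.

Lemma zmod6 (W : zmodType) (x1 x2 x3 x4 x5 x6 : W) :
  (x1 - x2 - (x3 - x4)) + (x3 - x5 - (x6 - x2)) + (x6 - x4 - (x1 - x5)) = 0.
Proof.
rewrite !opprB !addrA !subrK.
by rewrite (addrAC _ (-x5) x2) (addrAC _ x4 x2) subrK (addrAC _ (-x5) (-x4)) addrK subrK subrr.
Qed.

Lemma semidirect_ok : BiHomLie (g := (g * V)%type)
   (semidirect_br br act al_inv be alV beV_inv) (dsum_map al alV) (dsum_map be beV).
Proof.
have K0 := keyK.
case: HL => [[lal lbe] [bl1 bl2] cab skew jac].
case: HR => [[lalV lbeV] [al1 al2] cabV [eqa eqb] rep].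
have cab' : forall x, al (be x) = be (al x) by move=> x; exact: (cab x).
have lali := lin_inv lal Hal Hal'.
have lbeVi := lin_inv lbeV HbeV HbeV'.
split.
- split; move=> k [x1 x2] [y1 y2]; rewrite /dsum_map /=.
  + by rewrite lal lalV.
  + by rewrite lbe lbeV.
- split.
  + move=> [x1 x2] k [y1 y2] [z1 z2]; rewrite /semidirect_br /=.
    rewrite bl1 (al1 x1) (lbe) (lali) (al2).
    by apply: injective_projections => //=; rewrite scalerBr opprD addrACA.
  + move=> [y1 y2] k [x1 x2] [z1 z2]; rewrite /semidirect_br /=.
    rewrite bl2 al2 (lbeVi) (lalV) (al1).
    by apply: injective_projections => //=; rewrite scalerBr opprD addrACA.
- by move=> [x1 x2]; rewrite /dsum_map /=; congr pair; [exact: cab | exact: cabV].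
- move=> [p a] [q b]; rewrite /semidirect_br /dsum_map /=.
  by rewrite -!cab' !Hal !HbeV; apply: injective_projections => //=; rewrite ?skew ?opprB.
- move=> [p a] [q b] [r c]; rewrite /semidirect_br /dsum_map /=.
  rewrite -!cab' !Hal !HbeV !K0 !(linB (al1 _)).
  apply: injective_projections => /=; first exact: jac.
  exact: zmod6.
Qed.
End SD.
Lemma Snf (K : fieldType) (W : lmodType K) (lam eta : K) (x1 x2 x3 x4 : W) :
  lam *: (lam *: x1 + eta *: x2) + eta *: (lam *: x3 + eta *: x4) =
  (lam * lam) *: x1 + (lam * eta) *: (x2 + x3) + (eta * eta) *: x4.
Proof. by rewrite !scalerDr !scalerA (mulrC eta lam) !addrA. Qed.

Lemma z3 (W : zmodType) (a a' b b' c c' : W) :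
  (a - a') + (b - b') + (c - c') = (a + b + c) - (a' + b' + c').
Proof. by rewrite (addrACA a) -opprD addrACA -opprD. Qed.

Lemma z4 (W : zmodType) (x y z t : W) : x - y + z - t = (x + z) - (t + y).
Proof. by rewrite (addrAC x) -[x + z - y - t]addrA -opprD (addrC y). Qed.

Lemma combo (K : fieldType) (W : lmodType K) (lam eta k : K) (A B C D : W) :
  lam *: (k *: A + B) + eta *: (k *: C + D) = k *: (lam *: A + eta *: C) + (lam *: B + eta *: D).
Proof. by rewrite !scalerDr !scalerA (mulrC lam) (mulrC eta) addrACA. Qed.

Lemma combo_rep (K : fieldType) (g V : lmodType K)
  (br1 br2 : g -> g -> g) (al be : g -> g)
  (act1 act2 : g -> V -> V) (alV beV : V -> V) (lam eta : K) :
  CompatBiHomRep br1 br2 al be act1 act2 alV beV ->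
  BiHomRep (fun x y => lam *: br1 x y + eta *: br2 x y) al be
     (fun p v => lam *: act1 p v + eta *: act2 p v) alV beV.
Proof.
case=> [[[lalV lbeV] [a11 a12] cabV [ea1 eb1] rep1] [_ [a21 a22] _ [ea2 eb2] rep2] comp].
have A1l : forall x y w, act1 (x + y) w = act1 x w + act1 y w by move=> x y w; exact: (linD (a12 w)).
have A1lZ : forall k x w, act1 (k *: x) w = k *: act1 x w by move=> k x w; exact: (linZ (a12 w)).
have A2l : forall x y w, act2 (x + y) w = act2 x w + act2 y w by move=> x y w; exact: (linD (a22 w)).
have A2lZ : forall k x w, act2 (k *: x) w = k *: act2 x w by move=> k x w; exact: (linZ (a22 w)).
have A1r : forall x u v, act1 x (u + v) = act1 x u + act1 x v by move=> x u v; exact: (linD (a11 x)).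
have A1rZ : forall k x w, act1 x (k *: w) = k *: act1 x w by move=> k x w; exact: (linZ (a11 x)).
have A2r : forall x u v, act2 x (u + v) = act2 x u + act2 x v by move=> x u v; exact: (linD (a21 x)).
have A2rZ : forall k x w, act2 x (k *: w) = k *: act2 x w by move=> k x w; exact: (linZ (a21 x)).
split => //.
- split.
  + by move=> x k u v /=; rewrite a11 a21 combo.
  + by move=> y k u v /=; rewrite a12 a22 combo.
- split=> p v /=.
  + by rewrite ea1 ea2 -!(linZ lalV) -(linD lalV).
  + by rewrite eb1 eb2 -!(linZ lbeV) -(linD lbeV).
- move=> p q v /=.
  rewrite !A1l !A1lZ !A2l !A2lZ !A1r !A1rZ !A2r !A2rZ !Snf.
  rewrite rep1 rep2 (addrC (act1 (br2 _ _) _)) comp z4 !scalerBr.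
  exact: z3.
  
Qed.

Theorem proposition3p6 (K : fieldType) (g V : lmodType K)
  (br1 br2 : g -> g -> g) (al be : g -> g)
  (act1 act2 : g -> V -> V) (alV beV : V -> V)
  (al_inv be_inv : g -> g) (alV_inv beV_inv : V -> V)
  (Hal : cancel al al_inv) (Hal' : cancel al_inv al)
  (Hbe : cancel be be_inv) (Hbe' : cancel be_inv be)
  (HalV : cancel alV alV_inv) (HalV' : cancel alV_inv alV)
  (HbeV : cancel beV beV_inv) (HbeV' : cancel beV_inv beV) :
  CompatBiHomLie br1 br2 al be ->
  CompatBiHomRep br1 br2 al be act1 act2 alV beV ->
  CompatBiHomLie (g := (g * V)%type)
    (semidirect_br br1 act1 al_inv be alV beV_inv)
    (semidirect_br br2 act2 al_inv be alV beV_inv)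
    (dsum_map al alV) (dsum_map be beV).
Proof.
move=> HL HR.
have HR' := HR.
case: HL => HL1 HL2 HL3.
case: HR' => HR1 HR2 _.
split.
- exact: (semidirect_ok Hal Hal' HalV HalV' HbeV HbeV' HL1 HR1).
- exact: (semidirect_ok Hal Hal' HalV HalV' HbeV HbeV' HL2 HR2).
- move=> lam eta.
  have -> : (fun x y => lam *: semidirect_br br1 act1 al_inv be alV beV_inv x y
                        + eta *: semidirect_br br2 act2 al_inv be alV beV_inv x y)
     = semidirect_br (fun x y => lam *: br1 x y + eta *: br2 x y)
          (fun p v => lam *: act1 p v + eta *: act2 p v) al_inv be alV beV_inv.
    apply: functional_extensionality => x; apply: functional_extensionality => y.
    rewrite /semidirect_br; apply: injective_projections => //=.
    by rewrite !scalerBr opprD addrACA.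
  exact: (semidirect_ok Hal Hal' HalV HalV' HbeV HbeV' (HL3 lam eta) (combo_rep lam eta HR)).
Qed.
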